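(* Let $0<q<\infty$ and $\frac{q}{q+1}<p<\infty$, and let $r=\frac{pq}{pq+p-q}$. Then $$\frac{p\sin_{p,q}x}{x}+\frac{r\operatorname{tam}_{p,q}x}{x}>p+r \quad \text{for all } x\in\left(0,\tfrac{\pi_{p,q}}{2}\right),$$ and $$\frac{p\sinh_{p,q}x}{x}+\frac{r\operatorname{tamh}_{p,q}x}{x}>p+r \quad \text{for all } x\in\left(0,\tfrac{\pi_{r,q}}{2}\right).$$
   Context: For $0<q<\infty$ and $\frac{q}{q+1}<p<\infty$: let $F_{p,q}(y)=\int_0^y (1-t^q)^{-1/p}\,dt$ for $y\in[0,1)$ and $\pi_{p,q}=2\int_0^1(1-t^q)^{-1/p}\,dt\in(0,\infty]$ (it equals $\infty$ when $p\le 1$). The function $\sin_{p,q}:[0,\pi_{p,q}/2)\to[0,1)$ is the inverse of $F_{p,q}$, $\cos_{p,q}x=\frac{d}{dx}\sin_{p,q}x$, and $\operatorname{tam}_{p,q}x=\sin_{p,q}x/\cos_{p,q}^{p/q}x$. Let $G_{p,q}(y)=\int_0^y(1+t^q)^{-1/p}\,dt$ for $y\in[0,\infty)$; its range is $[0,\pi_{r,q}/2)$ with $r=\frac{pq}{pq+p-q}$ (which also satisfies $\frac{q}{q+1}<r<\infty$). The function $\sinh_{p,q}:[0,\pi_{r,q}/2)\to[0,\infty)$ is the inverse of $G_{p,q}$, $\cosh_{p,q}x=\frac{d}{dx}\sinh_{p,q}x$, and $\operatorname{tamh}_{p,q}x=\sinh_{p,q}x/\cosh_{p,q}^{p/q}x$.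 *)

(* Defs.v *)
From Stdlib Require Import Reals ClassicalEpsilon.
From Coquelicot Require Import Coquelicot.
Open Scope R_scope.

(* real power t^a for t >= 0, with the convention 0^a = 0 *)
Definition rpow (t a : R) : R := if Req_EM_T t 0 then 0 else Rpower t a.

Definition F_pq (p q y : R) : R :=
  RInt (fun t => rpow (1 - rpow t q) (- / p)) 0 y.

Definition G_pq (p q y : R) : R :=
  RInt (fun t => rpow (1 + rpow t q) (- / p)) 0 y.

(* pi_{p,q} = 2 \int_0^1 (1-t^q)^{-1/p} dt in (0, +oo]; since the integrand is
   positive, the (possibly improper) integral equals sup_{0<=y<1} F_{p,q}(y). *)
Definition pi_pq (p q : R) : Rbar :=
  Rbar_mult 2 (Lub_Rbar (fun z => exists y, 0 <= y < 1 /\ z = F_pq p q y)).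

Definition sin_pq (p q x : R) : R :=
  epsilon (inhabits 0) (fun y => 0 <= y < 1 /\ F_pq p q y = x).

Definition cos_pq (p q x : R) : R := Derive (sin_pq p q) x.

Definition tam_pq (p q x : R) : R :=
  sin_pq p q x / rpow (cos_pq p q x) (p / q).

Definition sinh_pq (p q x : R) : R :=
  epsilon (inhabits 0) (fun y => 0 <= y /\ G_pq p q y = x).

Definition cosh_pq (p q x : R) : R := Derive (sinh_pq p q) x.

Definition tamh_pq (p q x : R) : R :=
  sinh_pq p q x / rpow (cosh_pq p q x) (p / q).

(* Main.v *)
Require Import Defs.
From Stdlib Require Import Reals Ranalysis5 Lra ClassicalEpsilon.
From Coquelicot Require Import Coquelicot.
Open Scope R_scope.


Definition P (q t : R) := rpow (Rabs t) q.
Definition phi (sg a q t : R) := rpow (1 + sg * P q t) (- / a).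
Definition Phi (sg a q y : R) := RInt (phi sg a q) 0 y.
Definition dom (sg q t : R) := 0 < 1 + sg * P q t.

Lemma rpow_pos u a : 0 < u -> rpow u a = exp (a * ln u).
Proof. intros. unfold rpow. destruct (Req_EM_T u 0); [lra|reflexivity]. Qed.

Lemma rpow_gt0 u a : 0 < u -> 0 < rpow u a.
Proof. intros. rewrite rpow_pos by auto. apply exp_pos. Qed.

Lemma P_nonneg q t : 0 <= P q t.
Proof. unfold P, rpow. destruct (Req_EM_T _ 0); [lra|]. unfold Rpower; left; apply exp_pos. Qed.

Lemma P_0 q : P q 0 = 0.
Proof. unfold P, rpow. rewrite Rabs_R0. destruct (Req_EM_T 0 0); [auto|lra]. Qed.

Lemma P_pos q t : t <> 0 -> P q t = exp (q * ln (Rabs t)).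
Proof. intros. unfold P. apply rpow_pos. apply Rabs_pos_lt; auto. Qed.

Lemma P_mono q a b : 0 < q -> Rabs a <= Rabs b -> P q a <= P q b.
Proof.
  intros hq hab. destruct (Req_dec a 0) as [->|ha].
  - rewrite P_0. apply P_nonneg.
  - assert (0 < Rabs a) by (apply Rabs_pos_lt; auto).
    assert (hb : b <> 0) by (intro; subst; rewrite Rabs_R0 in hab; lra).
    rewrite !P_pos by auto.
    destruct (Req_dec (Rabs a) (Rabs b)) as [e|ne]. rewrite e; lra.
    left. apply exp_increasing. apply Rmult_lt_compat_l; auto.
    apply ln_increasing; lra.
Qed.

Lemma P_lt1 q t : 0 < q -> Rabs t < 1 -> P q t < 1.
Proof.
  intros hq ht. destruct (Req_dec t 0) as [->|h]. rewrite P_0; lra.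
  rewrite P_pos by auto. rewrite <- exp_0. apply exp_increasing.
  assert (0 < Rabs t) by (apply Rabs_pos_lt; auto).
  assert (ln (Rabs t) < 0) by (rewrite <- ln_1; apply ln_increasing; lra).
  nra.
Qed.

Lemma P_gt0 q t : t <> 0 -> 0 < P q t.
Proof. intros. rewrite P_pos by auto. apply exp_pos. Qed.

Lemma cont_rpow u a : 0 < u -> continuous (fun v => rpow v a) u.
Proof.
  intros hu. apply (@ex_derive_continuous R_AbsRing R_NormedModule).
  apply (ex_derive_ext_loc (fun v => exp (a * ln v)) (fun v => rpow v a)).
  - apply (filter_imp (fun v => 0 < v)). intros; rewrite rpow_pos; auto.
    apply (open_gt 0 u hu).
  - auto_derive. auto.
Qed.

Lemma ball_R (x e y : R) : ball x e y <-> Rabs (y - x) < e.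
Proof. reflexivity. Qed.

Lemma cont_P q t : 0 < q -> continuous (P q) t.
Proof.
  intros hq. destruct (Req_dec t 0) as [->|ht].
  - apply filterlim_locally. intros eps.
    exists (mkposreal _ (exp_pos (/ q * ln eps))). simpl. intros y Hy.
    change (Rabs (y - 0) < exp (/ q * ln eps)) in Hy.
    change (Rabs (P q y - P q 0) < eps). rewrite P_0. rewrite !Rminus_0_r in *.
    rewrite Rabs_pos_eq by apply P_nonneg.
    destruct (Req_dec y 0) as [->|hy]. rewrite P_0. apply cond_pos.
    rewrite P_pos by auto.
    replace (pos eps) with (exp (q * (/ q * ln eps))).
    apply exp_increasing. apply Rmult_lt_compat_l; auto.
    rewrite <- (ln_exp (/ q * ln eps)). apply ln_increasing.
    apply Rabs_pos_lt; auto. auto.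
    replace (q * (/ q * ln eps)) with (ln eps) by (field; lra).
    apply exp_ln, cond_pos.
  - unfold P.
    apply (continuous_comp Rabs (fun v => rpow v q)).
    exact (@continuous_abs R_AbsRing t).
    apply cont_rpow. apply Rabs_pos_lt; auto.
Qed.

Lemma cont_Q sg q t : 0 < q -> continuous (fun t => 1 + sg * P q t) t.
Proof.
  intros hq.
  apply (continuous_plus (fun _ => 1) (fun t => sg * P q t)).
  apply continuous_const.
  apply (continuous_mult (fun _ => sg) (P q)). apply continuous_const.
  apply cont_P; auto.
Qed.

Lemma cont_phi sg a q t : 0 < q -> dom sg q t -> continuous (phi sg a q) t.
Proof.
  intros hq hd. unfold phi.
  apply (continuous_comp (fun t => 1 + sg * P q t) (fun v => rpow v (- / a))).
  apply cont_Q; auto. apply cont_rpow; auto.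
Qed.

Lemma dom_down sg q t y : 0 < q -> (sg = 1 \/ sg = -1) -> Rabs t <= Rabs y ->
  dom sg q y -> dom sg q t.
Proof.
  unfold dom. intros hq [->| ->] hty hy.
  - pose proof (P_nonneg q t). lra.
  - pose proof (P_mono q t y hq hty). lra.
Qed.

Lemma dom_loc sg q y : 0 < q -> dom sg q y -> locally y (dom sg q).
Proof.
  intros hq hy. apply (cont_Q sg q y hq (fun z => 0 < z)).
  apply (open_gt 0 _ hy).
Qed.

Lemma Phi_deriv sg a q y : 0 < q -> (sg = 1 \/ sg = -1) -> dom sg q y ->
  is_derive (Phi sg a q) y (phi sg a q y).
Proof.
  intros hq hsg hy. apply (is_derive_RInt (phi sg a q) (Phi sg a q) 0).
  - apply (filter_imp (dom sg q)); [| apply dom_loc; auto].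
    intros b hb. apply (RInt_correct (V := R_CompleteNormedModule)).
    apply (ex_RInt_continuous (V := R_CompleteNormedModule)).
    intros z hz. apply cont_phi; auto. apply dom_down with (y := b); auto.
    revert hz. unfold Rmin, Rmax. destruct (Rle_dec 0 b);
    unfold Rabs; destruct (Rcase_abs z); destruct (Rcase_abs b); lra.
  - apply cont_phi; auto.
Qed.

Lemma Phi_cont sg a q y : 0 < q -> (sg = 1 \/ sg = -1) -> dom sg q y ->
  continuity_pt (Phi sg a q) y.
Proof.
  intros. apply continuity_pt_filterlim.
  apply (@ex_derive_continuous R_AbsRing R_NormedModule).
  eexists. apply Phi_deriv; auto.
Qed.

Lemma Phi_0 sg a q : Phi sg a q 0 = 0.
Proof. unfold Phi. rewrite RInt_point. reflexivity. Qed.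

Lemma F_Phi p q y : 0 <= y -> F_pq p q y = Phi (-1) p q y.
Proof.
  intros hy. unfold F_pq, Phi, phi, P. apply RInt_ext.
  intros t [h1 h2]. rewrite Rmin_left in h1 by lra.
  rewrite (Rabs_pos_eq t) by lra. f_equal. ring.
Qed.

Lemma G_Phi p q y : 0 <= y -> G_pq p q y = Phi 1 p q y.
Proof.
  intros hy. unfold G_pq, Phi, phi, P. apply RInt_ext.
  intros t [h1 h2]. rewrite Rmin_left in h1 by lra.
  rewrite (Rabs_pos_eq t) by lra. f_equal. ring.
Qed.

Lemma phi_pos sg a q t : dom sg q t -> 0 < phi sg a q t.
Proof. intros; unfold phi; apply rpow_gt0; auto. Qed.

Lemma phi_exp sg a q t : dom sg q t -> phi sg a q t = exp (- / a * ln (1 + sg * P q t)).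
Proof. intros; unfold phi; apply rpow_pos; auto. Qed.


Lemma incr_of_deriv (Phi phi : R -> R) (D : R -> Prop) :
  (forall y, 0 < y -> D y -> is_derive Phi y (phi y) /\ 0 < phi y) ->
  (forall y z, 0 < y <= z -> D z -> D y) ->
  forall a b, 0 < a -> a < b -> D b -> Phi a < Phi b.
Proof.
  intros hd hD a b ha hab hb.
  destruct (MVT_gen Phi a b phi) as [c [hc e]].
  - intros x hx. rewrite Rmin_left, Rmax_right in hx by lra.
    apply hd. lra. apply hD with b; auto; lra.
  - intros x hx. rewrite Rmin_left, Rmax_right in hx by lra.
    apply continuity_pt_filterlim.
    apply (@ex_derive_continuous R_AbsRing R_NormedModule).
    exists (phi x). apply hd. lra. apply hD with b; auto; lra.
  - rewrite Rmin_left, Rmax_right in hc by lra.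
    assert (0 < phi c) by (apply hd; [lra| apply hD with b; auto; lra]).
    nra.
Qed.

Lemma inv_deriv (Phi phi g : R -> R) (D : R -> Prop) x ub :
  (forall y, 0 < y -> D y -> is_derive Phi y (phi y) /\ 0 < phi y) ->
  (forall y z, 0 < y <= z -> D z -> D y) ->
  0 < x < ub ->
  (forall x', 0 < x' <= ub -> 0 < g x' /\ D (g x') /\ Phi (g x') = x') ->
  is_derive g x (/ phi (g x)).
Proof.
  intros hd hD hx hg.
  pose proof (incr_of_deriv Phi phi D hd hD) as hinc.
  assert (gmono : forall x1 x2, 0 < x1 -> x1 <= x2 -> x2 <= ub -> g x1 <= g x2).
  { intros x1 x2 h1 h12 h2.
    destruct (hg x1) as [g1 [d1 e1]]; [lra|].
    destruct (hg x2) as [g2 [d2 e2]]; [lra|].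
    destruct (Rle_lt_dec (g x1) (g x2)) as [l|l]; auto.
    assert (Phi (g x2) < Phi (g x1)) by (apply hinc; auto). lra. }
  assert (gsmono : forall x1 x2, 0 < x1 -> x1 < x2 -> x2 <= ub -> g x1 < g x2).
  { intros x1 x2 h1 h12 h2.
    destruct (hg x1) as [g1 [d1 e1]]; [lra|].
    destruct (hg x2) as [g2 [d2 e2]]; [lra|].
    pose proof (gmono x1 x2 h1 (Rlt_le _ _ h12) h2).
    destruct (Req_dec (g x1) (g x2)) as [e|]; [|lra].
    rewrite e in e1. lra. }
  set (lb := x / 2).
  destruct (hg lb) as [glb [dlb elb]]; [unfold lb; lra|].
  destruct (hg ub) as [gub [dub eub]]; [lra|].
  destruct (hg x) as [gx [dx ex]]; [lra|].
  assert (hlu : g lb < g ub) by (apply gsmono; unfold lb; lra).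
  assert (Dint : forall a, g lb <= a <= g ub -> 0 < a /\ D a).
  { intros a ha. split. lra. apply hD with (g ub); auto; lra. }
  assert (Prf : forall a, g lb <= a <= g ub -> derivable_pt Phi a).
  { intros a ha. exists (phi a). apply is_derive_Reals. apply hd; apply Dint; auto. }
  assert (gcont : continuity_pt g x).
  { apply (continuity_pt_recip_interv Phi g (g lb) (g ub) hlu).
    - intros a b ha hab hb. apply hinc; auto. lra. apply hD with (g ub); auto; lra.
    - intros y hy1 hy2. rewrite elb in hy1; rewrite eub in hy2. unfold comp, id. apply hg. unfold lb in *. lra.
    - intros y hy1 hy2. rewrite elb in hy1; rewrite eub in hy2. split; apply gmono; unfold lb in *; lra.
    - intros a ha. apply continuity_pt_filterlim.
      apply (@ex_derive_continuous R_AbsRing R_NormedModule).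
      exists (phi a). apply hd; apply Dint; auto.
    - rewrite elb, eub. unfold lb; lra. }
  assert (Hincr : g lb <= g x <= g ub) by (split; apply gmono; unfold lb in *; lra).
  pose proof (derivable_pt_lim_recip_interv Phi g lb ub x Prf gcont) as H.
  assert (hlx : lb < x) by (unfold lb; lra).
  specialize (H ltac:(lra) ltac:(lra) Hincr).
  assert (hder : derive_pt Phi (g x) (Prf (g x) Hincr) = phi (g x)).
  { apply derive_pt_eq_0. apply is_derive_Reals. apply hd; auto. }
  rewrite hder in H.
  apply is_derive_Reals. replace (/ phi (g x)) with (1 / phi (g x)) by (unfold Rdiv; ring).
  apply H.
  - intros y hy. unfold comp, id. apply hg. unfold lb in hy. lra.
  - assert (0 < phi (g x)) by (apply hd; auto). lra.
Qed.

Lemma pos_deriv (H df : R -> R) s : 0 < s -> H 0 = 0 ->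
  (forall y, 0 < y < s -> is_derive H y (df y)) ->
  (forall y, 0 <= y <= s -> continuity_pt H y) ->
  (forall y, 0 <= y <= s -> 0 <= df y) ->
  (forall y, 0 < y <= s -> 0 < df y) -> 0 < H s.
Proof.
  intros hs h0 hd hc h1 h2.
  destruct (MVT_gen H 0 (s/2) df) as [c [hc1 e1]].
  - intros y hy; rewrite Rmin_left, Rmax_right in hy by lra. apply hd; lra.
  - intros y hy; rewrite Rmin_left, Rmax_right in hy by lra. apply hc; lra.
  - destruct (MVT_gen H (s/2) s df) as [c' [hc2 e2]].
    + intros y hy; rewrite Rmin_left, Rmax_right in hy by lra. apply hd; lra.
    + intros y hy; rewrite Rmin_left, Rmax_right in hy by lra. apply hc; lra.
    + rewrite Rmin_left, Rmax_right in hc1, hc2 by lra.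
      assert (0 <= df c) by (apply h1; lra).
      assert (0 < df c') by (apply h2; lra).
      nra.
Qed.

Lemma amgm l z : 0 < l < 1 -> z <> 0 -> exp (l * z) < l * exp z + (1 - l).
Proof.
  intros hl hz.
  assert (e1 : 1 + (1 - l) * z < exp ((1 - l) * z)).
  { apply exp_ineq1. intro h. apply Rmult_integral in h. destruct h; lra. }
  pose proof (exp_ineq1_le (- l * z)) as e2.
  assert (h : 1 < l * exp ((1 - l) * z) + (1 - l) * exp (- l * z)) by nra.
  assert (hp := exp_pos (l * z)).
  replace (l * exp z + (1 - l)) with
    (exp (l * z) * (l * exp ((1 - l) * z) + (1 - l) * exp (- l * z))).
  nra.
  rewrite Rmult_plus_distr_l.
  replace (exp (l * z) * (l * exp ((1 - l) * z))) with (l * (exp (l * z) * exp ((1 - l) * z))) by ring.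
  replace (exp (l * z) * ((1 - l) * exp (- l * z))) with ((1 - l) * (exp (l * z) * exp (- l * z))) by ring.
  rewrite <- !exp_plus.
  replace (l * z + (1 - l) * z) with z by ring.
  replace (l * z + - l * z) with 0 by ring. rewrite exp_0. ring.
Qed.

Lemma exists_ub (x : R) (X : Rbar) : Rbar_lt x X -> exists ub, x < ub /\ Rbar_lt ub X.
Proof.
  destruct X as [X| |]; simpl; intros h.
  - exists ((x + X) / 2). split; lra.
  - exists (x + 1). split; [lra|exact I].
  - destruct h.
Qed.

Lemma lub_elt (E : R -> Prop) (x : R) :
  Rbar_lt x (Rbar_mult (/ 2) (Rbar_mult 2 (Lub_Rbar E))) -> exists z, E z /\ x < z.
Proof.
  intros h. destruct (Lub_Rbar_correct E) as [hub hl].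
  apply NNPP. intro hn.
  assert (hb : is_ub_Rbar E x).
  { intros z hz. simpl. apply Rnot_lt_le. intro. apply hn. exists z; auto. }
  specialize (hl _ hb).
  destruct (Lub_Rbar E) as [L| |]; simpl in *.
  - replace (/ 2 * (2 * L)) with L in h by field. lra.
  - destruct hl.
  - revert h. unfold Rbar_mult, Rbar_mult'. 
    destruct (Rle_dec 0 2); [|lra]. destruct (Rle_lt_or_eq_dec 0 2 r); [|lra].
    simpl. destruct (Rle_dec 0 (/2)); [|lra]. destruct (Rle_lt_or_eq_dec 0 (/2) r1); [|lra].
    simpl. tauto.
Qed.


Lemma P_t q t : 0 < t -> P q t = exp (q * ln t).
Proof. intros. rewrite P_pos by lra. rewrite Rabs_pos_eq by lra. auto. Qed.

Lemma loc_pos_dom sg q t : 0 < q -> 0 < t -> dom sg q t ->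
  locally t (fun u => 0 < u /\ dom sg q u).
Proof.
  intros. apply filter_and. apply (open_gt 0 t); auto. apply dom_loc; auto.
Qed.

Lemma psi_deriv sg q t : 0 < q -> 0 < t -> dom sg q t ->
  is_derive (fun t => t * phi sg q q t) t (exp (- (q + 1) / q * ln (1 + sg * P q t))).
Proof.
  intros hq ht hd.
  apply (is_derive_ext_loc (fun t => t * exp (- / q * ln (1 + sg * exp (q * ln t))))).
  { apply (filter_imp (fun u => 0 < u /\ dom sg q u)); [|apply loc_pos_dom; auto].
    intros u [hu hdu]. rewrite phi_exp by auto. rewrite P_t by auto. reflexivity. }
  assert (hd' := hd). unfold dom in hd'. rewrite P_t in hd' by auto.
  auto_derive.
  - repeat split; auto.
  - rewrite P_t by auto.
    set (w := exp (q * ln t)) in *.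
    set (u := 1 + sg * w) in *.
    replace (- (q + 1) / q * ln u) with (- / q * ln u + - ln u) by (field; lra).
    rewrite exp_plus, exp_Ropp, exp_ln by auto.
    unfold u in *. field. repeat split; lra.
Qed.

Definition Hf sg p q r y := p * y + r * (y * phi sg q q y) - (p + r) * Phi sg p q y.
Definition dH sg p q r y :=
  p + r * exp (- (q + 1) / q * ln (1 + sg * P q y)) - (p + r) * phi sg p q y.

Lemma Hf_deriv sg p q r y : 0 < q -> (sg = 1 \/ sg = -1) -> 0 < y -> dom sg q y ->
  is_derive (Hf sg p q r) y (dH sg p q r y).
Proof.
  intros hq hsg hy hd. unfold Hf, dH.
  apply (is_derive_minus (fun t => p * t + r * (t * phi sg q q t)) (fun t => (p + r) * Phi sg p q t)).
  - apply (is_derive_plus (fun t => p * t) (fun t => r * (t * phi sg q q t))).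
    + auto_derive; auto; ring.
    + apply is_derive_scal. apply psi_deriv; auto.
  - apply is_derive_scal. apply Phi_deriv; auto.
Qed.

Lemma dH_nonneg sg p q r y : 0 < q -> 0 < p -> 0 < r -> r * (q + 1) * p = (p + r) * q ->
  (sg = 1 \/ sg = -1) -> 0 <= y -> dom sg q y ->
  (y = 0 -> dH sg p q r y = 0) /\ (0 < y -> 0 < dH sg p q r y).
Proof.
  intros hq hp hr hrel hsg hy hd. unfold dH. rewrite phi_exp by auto.
  split.
  - intros ->. rewrite P_0. rewrite Rmult_0_r, Rplus_0_r, ln_1, !Rmult_0_r, exp_0. ring.
  - intros hy'. unfold dom in hd.
    set (L := ln (1 + sg * P q y)).
    assert (hL : L <> 0).
    { unfold L. intro h. pose proof (P_gt0 q y ltac:(lra)).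
      assert (1 + sg * P q y = 1). { rewrite <- (exp_ln (1 + sg * P q y)) by auto. rewrite h. apply exp_0. }
      destruct hsg; subst sg; lra. }
    set (lam := r / (p + r)).
    set (z := - (q + 1) / q * L).
    assert (hz : z <> 0).
    { assert (hq1 : 0 < (q+1)/q) by (apply Rdiv_lt_0_compat; lra).
      unfold z. replace (-(q+1)/q * L) with (-((q+1)/q * L)) by (field; lra).
      intro h. apply hL. assert (h3 : (q+1)/q * L = (q+1)/q * 0) by lra.
      apply Rmult_eq_reg_l in h3; lra. }
    assert (hlz : - / p * L = lam * z).
    { unfold lam, z.
      replace (r/(p+r) * (-(q+1)/q*L)) with (- (r*(q+1)*p) / ((p+r)*q*p) * L) by (field; repeat split; lra).
      rewrite hrel. field. repeat split; lra. }
    rewrite hlz.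
    assert (hlam : 0 < lam < 1).
    { unfold lam. split. apply Rdiv_lt_0_compat; lra.
      apply Rmult_lt_reg_r with (p + r); [lra|]. field_simplify; lra. }
    pose proof (amgm lam z hlam hz).
    assert (p = (p + r) * (1 - lam) /\ r = (p + r) * lam) as [e1 e2].
    { unfold lam. split; field; lra. }
    replace (p + r * exp z - (p + r) * exp (lam * z))
      with ((p + r) * (lam * exp z + (1 - lam) - exp (lam * z))).
    apply Rmult_lt_0_compat; lra.
    unfold lam; field; lra.
Qed.

Lemma Hf_cont sg p q r y : 0 < q -> (sg = 1 \/ sg = -1) -> dom sg q y ->
  continuity_pt (Hf sg p q r) y.
Proof.
  intros hq hsg hd. apply continuity_pt_filterlim. unfold Hf.
  apply (continuous_minus (fun t => p * t + r * (t * phi sg q q t)) (fun t => (p + r) * Phi sg p q t)).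
  - apply (continuous_plus (fun t => p * t) (fun t => r * (t * phi sg q q t))).
    + apply (continuous_mult (fun _ => p) (fun t => t)). apply continuous_const. apply continuous_id.
    + apply (continuous_mult (fun _ => r) (fun t => t * phi sg q q t)). apply continuous_const.
      apply (continuous_mult (fun t => t) (phi sg q q)). apply continuous_id.
      apply cont_phi; auto.
  - apply (continuous_mult (fun _ => p + r) (Phi sg p q)). apply continuous_const.
    apply continuity_pt_filterlim. apply Phi_cont; auto.
Qed.

Lemma H_pos sg p q r s : 0 < q -> 0 < p -> 0 < r -> r * (q + 1) * p = (p + r) * q ->
  (sg = 1 \/ sg = -1) -> 0 < s -> dom sg q s -> 0 < Hf sg p q r s.
Proof.
  intros hq hp hr hrel hsg hs hd.
  assert (hdy : forall y, 0 <= y <= s -> dom sg q y).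
  { intros y hy. apply dom_down with (y := s); auto.
    rewrite !Rabs_pos_eq; lra. }
  apply (pos_deriv _ (dH sg p q r) s hs).
  - unfold Hf. rewrite Phi_0. ring.
  - intros y hy. apply Hf_deriv; auto; try lra. apply hdy; lra.
  - intros y hy. apply Hf_cont; auto.
  - intros y hy. destruct (Req_dec y 0) as [->|h].
    + rewrite (proj1 (dH_nonneg sg p q r 0 hq hp hr hrel hsg (Rle_refl 0) (hdy 0 ltac:(lra))) eq_refl). lra.
    + left. apply (proj2 (dH_nonneg sg p q r y hq hp hr hrel hsg ltac:(lra) (hdy y ltac:(lra)))). lra.
  - intros y hy. apply (proj2 (dH_nonneg sg p q r y hq hp hr hrel hsg ltac:(lra) (hdy y ltac:(lra)))). lra.
Qed.


Lemma dom_m1 q t : 0 < q -> Rabs t < 1 -> dom (-1) q t.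
Proof. intros. unfold dom. pose proof (P_lt1 q t H H0). lra. Qed.

Lemma dom_1 q t : dom 1 q t.
Proof. unfold dom. pose proof (P_nonneg q t). lra. Qed.

Lemma tam_form sg p q y : dom sg q y -> p <> 0 -> q <> 0 ->
  y / rpow (/ phi sg p q y) (p / q) = y * phi sg q q y.
Proof.
  intros hd hp hq. rewrite !phi_exp by auto.
  set (L := ln (1 + sg * P q y)).
  rewrite <- exp_Ropp. rewrite rpow_pos by apply exp_pos. rewrite ln_exp.
  replace (p / q * - (- / p * L)) with (- (- / q * L)) by (field; auto).
  rewrite exp_Ropp. field. apply Rgt_not_eq, exp_pos.
Qed.

Lemma sin_spec p q x : 0 < q -> 0 < x -> Rbar_lt x (Rbar_mult (/ 2) (pi_pq p q)) ->
  0 < sin_pq p q x < 1 /\ Phi (-1) p q (sin_pq p q x) = x.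
Proof.
  intros hq hx hX. unfold pi_pq in hX.
  destruct (lub_elt _ _ hX) as [z [[y0 [hy0 ->]] hz]].
  rewrite F_Phi in hz by lra.
  assert (ey : exists y, 0 <= y < 1 /\ F_pq p q y = x).
  { assert (0 < y0).
    { destruct (Req_dec y0 0) as [e|]. rewrite e, Phi_0 in hz. lra. lra. }
    destruct (IVT_interv (fun t => Phi (-1) p q t - x) 0 y0) as [y [hy e]].
    - intros a ha. apply (continuity_pt_minus (Phi (-1) p q) (fun _ => x)).
      apply Phi_cont; auto. apply dom_m1; auto. rewrite Rabs_pos_eq; lra.
      apply continuity_pt_const. intros u v; auto.
    - lra.
    - rewrite Phi_0. lra.
    - lra.
    - exists y. split. lra. rewrite F_Phi by lra. lra. }
  pose proof (epsilon_spec (inhabits 0) _ ey) as [h1 h2].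
  unfold sin_pq. set (s := epsilon _ _) in *.
  rewrite F_Phi in h2 by lra.
  split; auto. split; [|lra].
  destruct (Req_dec s 0) as [e|]. rewrite e, Phi_0 in h2. lra. lra.
Qed.

Lemma cos_val p q x : 0 < q -> 0 < x -> Rbar_lt x (Rbar_mult (/ 2) (pi_pq p q)) ->
  cos_pq p q x = / phi (-1) p q (sin_pq p q x).
Proof.
  intros hq hx hX.
  destruct (exists_ub x _ hX) as [ub [h1 h2]].
  unfold cos_pq. apply is_derive_unique.
  apply (inv_deriv (Phi (-1) p q) (phi (-1) p q) (sin_pq p q) (fun y => y < 1) x ub).
  - intros y hy hy1. split. apply Phi_deriv; auto. apply dom_m1; auto. rewrite Rabs_pos_eq; lra.
    apply phi_pos. apply dom_m1; auto. rewrite Rabs_pos_eq; lra.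
  - intros y z hyz hz. lra.
  - lra.
  - intros x' hx'. destruct (sin_spec p q x' hq ltac:(lra)) as [[a b] c].
    apply Rbar_le_lt_trans with ub; auto. simpl; lra.
    auto.
Qed.

Lemma subst_deriv p q t : 0 < q -> 0 < p -> q / (q + 1) < p -> 0 < t < 1 ->
  phi 1 p q (t * phi (-1) q q t) * exp (- (q + 1) / q * ln (1 + -1 * P q t))
  = phi (-1) (p * q / (p * q + p - q)) q t.
Proof.
  intros hq hp hpq ht.
  assert (hD : 0 < p * q + p - q).
  { apply Rmult_lt_compat_r with (r := q + 1) in hpq; [|lra].
    unfold Rdiv in hpq. rewrite Rmult_assoc, Rinv_l in hpq by lra. nra. }
  assert (hd : dom (-1) q t) by (apply dom_m1; auto; rewrite Rabs_pos_eq; lra).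
  assert (hw : P q t = exp (q * ln t)) by (apply P_t; lra).
  assert (hw1 : 0 < P q t < 1).
  { split. apply P_gt0; lra. apply P_lt1; auto. rewrite Rabs_pos_eq; lra. }
  rewrite (phi_exp (-1) (p * q / (p * q + p - q)) q t hd).
  rewrite (phi_exp (-1) q q t hd).
  set (w := P q t) in *.
  assert (e : 1 + -1 * w = 1 - w) by ring. rewrite !e.
  set (L := ln (1 - w)).
  assert (hL : exp L = 1 - w) by (unfold L; apply exp_ln; lra).
  assert (hpsi : 0 < t * exp (- / q * L)) by (apply Rmult_lt_0_compat; [lra|apply exp_pos]).
  rewrite (phi_exp 1 p q _ (dom_1 q _)).
  rewrite (P_t q _ hpsi).
  rewrite ln_mult, ln_exp by (try lra; apply exp_pos).
  replace (q * (ln t + - / q * L)) with (q * ln t + - L) by (field; lra).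
  rewrite exp_plus, <- hw, exp_Ropp, hL.
  replace (1 + 1 * (w * / (1 - w))) with (/ (1 - w)) by (field; lra).
  rewrite ln_Rinv by lra. fold L.
  rewrite <- exp_plus. f_equal. field. repeat split; lra.
Qed.

Lemma subst_id p q y : 0 < q -> 0 < p -> q / (q + 1) < p -> 0 <= y < 1 ->
  Phi 1 p q (y * phi (-1) q q y) = Phi (-1) (p * q / (p * q + p - q)) q y.
Proof.
  intros hq hp hpq hy.
  set (r := p * q / (p * q + p - q)).
  set (Dd := fun t => Phi 1 p q (t * phi (-1) q q t) - Phi (-1) r q t).
  assert (hdm : forall t, 0 <= t < 1 -> dom (-1) q t).
  { intros t ht. apply dom_m1; auto. rewrite Rabs_pos_eq; lra. }
  destruct (MVT_gen Dd 0 y (fun _ => 0)) as [c [hc e]].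
  - intros t ht. rewrite Rmin_left, Rmax_right in ht by lra.
    unfold Dd. replace 0 with (phi (-1) r q t - phi (-1) r q t) by ring.
    apply (is_derive_minus (fun t => Phi 1 p q (t * phi (-1) q q t)) (Phi (-1) r q)).
    + unfold r. rewrite <- subst_deriv by (auto; lra).
      rewrite Rmult_comm.
      apply (is_derive_comp (Phi 1 p q) (fun t => t * phi (-1) q q t)).
      apply Phi_deriv; auto. apply dom_1.
      apply psi_deriv; auto; try lra. apply hdm; lra.
    + apply Phi_deriv; auto. apply hdm; lra.
  - intros t ht. rewrite Rmin_left, Rmax_right in ht by lra.
    unfold Dd. apply (continuity_pt_minus (fun t => Phi 1 p q (t * phi (-1) q q t)) (Phi (-1) r q)).
    + apply continuity_pt_filterlim.
      apply (continuous_comp (fun t => t * phi (-1) q q t) (Phi 1 p q)).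
      apply (continuous_mult (fun t => t) (phi (-1) q q)). apply continuous_id.
      apply cont_phi; auto. apply hdm; lra.
      apply continuity_pt_filterlim. apply Phi_cont; auto. apply dom_1.
    + apply Phi_cont; auto. apply hdm; lra.
  - unfold Dd in e. rewrite Rmult_0_l, !Phi_0 in e. lra.
Qed.

Lemma sinh_spec p q x : 0 < q -> 0 < p -> q / (q + 1) < p -> 0 < x ->
  Rbar_lt x (Rbar_mult (/ 2) (pi_pq (p * q / (p * q + p - q)) q)) ->
  0 < sinh_pq p q x /\ Phi 1 p q (sinh_pq p q x) = x.
Proof.
  intros hq hp hpq hx hX. unfold pi_pq in hX.
  destruct (lub_elt _ _ hX) as [z [[y0 [hy0 ->]] hz]].
  rewrite F_Phi in hz by lra.
  rewrite <- subst_id in hz by auto.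
  assert (ey : exists y, 0 <= y /\ G_pq p q y = x).
  { assert (0 < y0).
    { destruct (Req_dec y0 0) as [e|]. rewrite e, Rmult_0_l, Phi_0 in hz. lra. lra. }
    assert (hps : 0 < y0 * phi (-1) q q y0).
    { apply Rmult_lt_0_compat; auto. apply phi_pos. apply dom_m1; auto. rewrite Rabs_pos_eq; lra. }
    destruct (IVT_interv (fun t => Phi 1 p q t - x) 0 (y0 * phi (-1) q q y0)) as [y [hy e]].
    - intros a ha. apply (continuity_pt_minus (Phi 1 p q) (fun _ => x)).
      apply Phi_cont; auto. apply dom_1.
      apply continuity_pt_const. intros u v; auto.
    - lra.
    - rewrite Phi_0. lra.
    - lra.
    - exists y. split. lra. rewrite G_Phi by lra. lra. }
  pose proof (epsilon_spec (inhabits 0) _ ey) as [h1 h2].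
  unfold sinh_pq. set (s := epsilon _ _) in *.
  rewrite G_Phi in h2 by lra.
  split; auto.
  destruct (Req_dec s 0) as [e|]. rewrite e, Phi_0 in h2. lra. lra.
Qed.

Lemma cosh_val p q x : 0 < q -> 0 < p -> q / (q + 1) < p -> 0 < x ->
  Rbar_lt x (Rbar_mult (/ 2) (pi_pq (p * q / (p * q + p - q)) q)) ->
  cosh_pq p q x = / phi 1 p q (sinh_pq p q x).
Proof.
  intros hq hp hpq hx hX.
  destruct (exists_ub x _ hX) as [ub [h1 h2]].
  unfold cosh_pq. apply is_derive_unique.
  apply (inv_deriv (Phi 1 p q) (phi 1 p q) (sinh_pq p q) (fun y => True) x ub).
  - intros y hy _. split. apply Phi_deriv; auto. apply dom_1.
    apply phi_pos. apply dom_1.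
  - auto.
  - lra.
  - intros x' hx'. destruct (sinh_spec p q x' hq hp hpq ltac:(lra)) as [a c].
    apply Rbar_le_lt_trans with ub; auto. simpl; lra.
    auto.
Qed.

Theorem theorem3p3 (p q : R) (hq : 0 < q) (hp : q / (q + 1) < p) :
  let r := p * q / (p * q + p - q) in
  (forall x : R, 0 < x -> Rbar_lt (Finite x) (Rbar_mult (/ 2) (pi_pq p q)) ->
     p * sin_pq p q x / x + r * tam_pq p q x / x > p + r) /\
  (forall x : R, 0 < x -> Rbar_lt (Finite x) (Rbar_mult (/ 2) (pi_pq r q)) ->
     p * sinh_pq p q x / x + r * tamh_pq p q x / x > p + r).
Proof.
  intros r.
  assert (hp0 : 0 < p).
  { apply Rlt_trans with (q / (q + 1)); auto. apply Rdiv_lt_0_compat; lra. }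
  assert (hD : 0 < p * q + p - q).
  { apply Rmult_lt_compat_r with (r := q + 1) in hp; [|lra].
    unfold Rdiv in hp. rewrite Rmult_assoc, Rinv_l in hp by lra. nra. }
  assert (hr : 0 < r) by (unfold r; apply Rdiv_lt_0_compat; nra).
  assert (hrel : r * (q + 1) * p = (p + r) * q) by (unfold r; field; lra).
  split.
  - intros x hx hX.
    destruct (sin_spec p q x hq hx hX) as [[hs0 hs1] hPhi].
    unfold tam_pq. rewrite (cos_val p q x hq hx hX).
    set (s := sin_pq p q x) in *.
    assert (hd : dom (-1) q s) by (apply dom_m1; auto; rewrite Rabs_pos_eq; lra).
    rewrite tam_form by (auto; lra).
    pose proof (H_pos (-1) p q r s hq hp0 hr hrel ltac:(auto) hs0 hd) as hH.
    unfold Hf in hH. rewrite hPhi in hH.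
    assert (e : p * s / x + r * (s * phi (-1) q q s) / x - (p + r)
              = (p * s + r * (s * phi (-1) q q s) - (p + r) * x) / x) by (field; lra).
    assert (0 < (p * s + r * (s * phi (-1) q q s) - (p + r) * x) / x)
      by (apply Rdiv_lt_0_compat; lra).
    lra.
  - intros x hx hX.
    destruct (sinh_spec p q x hq hp0 hp hx hX) as [hs0 hPhi].
    unfold tamh_pq. rewrite (cosh_val p q x hq hp0 hp hx hX).
    set (s := sinh_pq p q x) in *.
    assert (hd : dom 1 q s) by apply dom_1.
    rewrite tam_form by (auto; lra).
    pose proof (H_pos 1 p q r s hq hp0 hr hrel ltac:(auto) hs0 hd) as hH.
    unfold Hf in hH. rewrite hPhi in hH.
    assert (e : p * s / x + r * (s * phi 1 q q s) / x - (p + r)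
              = (p * s + r * (s * phi 1 q q s) - (p + r) * x) / x) by (field; lra).
    assert (0 < (p * s + r * (s * phi 1 q q s) - (p + r) * x) / x)
      by (apply Rdiv_lt_0_compat; lra).
    lra.
Qed.
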